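(* Let $G$ be a finite indecomposable group. Then $G$ has Property A if and only if $G$ is Chermak-Delgado simple.
   Context: All groups are finite. A group is indecomposable if it cannot be written as a direct product $H \times K$ with $H \neq 1$ and $K \neq 1$. A group $G$ has Property A if for every non-trivial abelian normal subgroup $A$ of $G$, $|G/C_G(A)| > |A|$. For $H \leq G$, $m_G(H) = |H|\,|C_G(H)|$; $m^*(G) = \max\{ m_G(H) : H \leq G\}$; $\mathcal{CD}(G) = \{ H \leq G : m_G(H) = m^*(G)\}$. $G$ is Chermak-Delgado simple if $\mathcal{CD}(G) = \{1, G\}$. *)

(* Defs.v *)
From mathcomp Require Import all_boot all_fingroup.
Set Implicit Arguments. Unset Strict Implicit. Unset Printing Implicit Defensive.
Import GroupScope.
Local Open Scope group_scope.

Section CD.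
Variable gT : finGroupType.

(* G is indecomposable: no internal direct decomposition G = H \x K with
   H, K both nontrivial (equivalent to abstract G ~ H x K). *)
Definition indecomposable (G : {group gT}) : Prop :=
  ~ exists H K : {group gT}, [/\ H \x K = G, H :!=: 1 & K :!=: 1].

Definition propertyA (G : {group gT}) : Prop :=
  forall A : {group gT}, A <| G -> abelian A -> A :!=: 1 ->
    #|A| < #|G / 'C_G(A)|.

Definition mG (G H : {group gT}) : nat := #|H| * #|'C_G(H)|.

Definition mstar (G : {group gT}) : nat :=
  \max_(H : {group gT} | H \subset G) mG G H.

Definition CD (G : {group gT}) : {set {group gT}} :=
  [set H : {group gT} | (H \subset G) && (mG G H == mstar G)].

Definition CD_simple (G : {group gT}) : Prop :=
  CD G = [set 1%G; G].

End CD.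

(* Main.v *)
Require Import Defs.
From mathcomp Require Import all_boot all_fingroup all_solvable.
From mathcomp Require Import zify.
Set Implicit Arguments. Unset Strict Implicit. Unset Printing Implicit Defensive.
Import GroupScope.
Local Open Scope group_scope.

Section Basic.
Variable gT : finGroupType.
Implicit Types G H K : {group gT}.

Lemma inCD G H : (H \in CD G) = (H \subset G) && (mG G H == mstar G).
Proof. by rewrite inE. Qed.

Lemma mG_le G H : H \subset G -> mG G H <= mstar G.
Proof. by move=> sHG; apply: (leq_bigmax_cond (P := fun H : {group gT} => H \subset G) H sHG). Qed.

Lemma CD_ex G : exists H, H \in CD G.
Proof.
have s1 : (1%G : {group gT}) \subset G by apply: sub1G.
case: (@arg_maxnP _ 1%G (fun H : {group gT} => H \subset G) (fun H : {group gT} => mG G H) s1) => H0 sH0 Hmax.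
exists H0; rewrite inCD sH0 eqn_leq mG_le //=.
by apply/bigmax_leqP => H sH; apply: Hmax.
Qed.

Lemma CD_sub G H : H \in CD G -> H \subset G.
Proof. by rewrite inCD => /andP[]. Qed.

Lemma CD_set G H K : H \in CD G -> gval K = gval H -> K \in CD G.
Proof. by move=> HCD eKH; rewrite (group_inj eKH). Qed.

Lemma CD_conj G H y : H \in CD G -> y \in G -> (H :^ y)%G \in CD G.
Proof.
rewrite !inCD => /andP[sHG /eqP mH] yG.
rewrite conj_subG //= /mG /= cardJg centJ -{1}(conjGid yG) -conjIg cardJg.
by rewrite -/(mG G H) mH eqxx.
Qed.

Lemma CD_cent G H : H \in CD G -> ('C_G(H))%G \in CD G.
Proof.
rewrite !inCD => /andP[sHG /eqP mH].
rewrite subsetIl /=; apply/eqP/anti_leq; rewrite mG_le ?subsetIl //=.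
rewrite -mH /mG mulnC leq_mul2l; apply/orP; right.
apply: subset_leq_card; rewrite subsetI sHG centsC subsetIr.
by [].
Qed.

Lemma CD_meet_join G H K : H \in CD G -> K \in CD G ->
  [/\ (H :&: K)%G \in CD G, (H <*> K)%G \in CD G & H * K = H <*> K].
Proof.
rewrite !inCD => /andP[sHG /eqP mH] /andP[sKG /eqP mK].
set M := mstar G.
have sIG : H :&: K \subset G by rewrite subIset ?sHG.
have sJG : H <*> K \subset G by rewrite join_subG sHG.
have le1 := mG_le sIG; have le2 := mG_le sJG.
rewrite /mG /= in le1 le2 mH mK.
have e1 := mul_cardG H K.
have e2 := mul_cardG ('C_G(H))%G ('C_G(K))%G; rewrite /= in e2.
have i1 : #|'C_G(H) * 'C_G(K)| <= #|'C_G(H :&: K)|.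
  apply: subset_leq_card; apply: (@mul_subG _ ('C_G(H :&: K))%G);
  by apply: setIS; apply: centS; rewrite ?subsetIl ?subsetIr.
have i2 : #|H * K| <= #|H <*> K|.
  by apply: subset_leq_card; apply: (@mul_subG _ (H <*> K)%G); rewrite ?joing_subl ?joing_subr.
have i3 : #|'C_G(H) :&: 'C_G(K)| <= #|'C_G(H <*> K)|.
  apply: subset_leq_card; rewrite centY subsetI subIset ?subsetIl //=.
  by apply: setISS; rewrite subsetIr.
have Mpos : 0 < M by rewrite /M -mH muln_gt0 !cardG_gt0.
have hx := cardG_gt0 (H :&: K)%G; have hc := cardG_gt0 ('C_G(H :&: K))%G.
have hq := cardG_gt0 ('C_G(H <*> K))%G.
rewrite /= in hx hc hq.
have big : (M * M <= (#|H :&: K| * #|'C_G(H :&: K)|) * (#|H <*> K| * #|'C_G(H <*> K)|))%N.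
  have -> : (M * M = (#|H| * #|K|) * (#|'C_G(H)| * #|'C_G(K)|))%N.
    by rewrite /M -{1}mH -mK mulnACA.
  rewrite e1 e2.
  have := leq_mul (leq_mul i2 (leqnn #|H :&: K|)) (leq_mul i1 i3).
  move=> h; apply: (leq_trans h); rewrite eq_leq //; nia.
set x := #|H :&: K| in le1 big hx e1 *.
set c1 := #|'C_G(H :&: K)| in le1 big hc i1 *.
set j := #|H <*> K| in le2 big i2 *.
set q := #|'C_G(H <*> K)| in le2 big hq i3 *.
rewrite -/M in le1 le2.
have E1 : (x * c1 = M)%N by nia.
have E2 : (j * q = M)%N by nia.
split.
- by rewrite sIG /mG /=; apply/eqP; exact: E1.
- by rewrite sJG /mG /=; apply/eqP; exact: E2.
- apply/eqP; rewrite eqEcard mul_subG ?joing_subl ?joing_subr //=.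
  have bb : (M * M <= #|(H * K)%g| * x * c1 * q)%N.
    have -> : (M * M = (#|H| * #|K|) * (#|'C_G(H)| * #|'C_G(K)|))%N.
      by rewrite /M -{1}mH -mK mulnACA.
    rewrite e1 e2 -/x; have := leq_mul (leqnn (#|(H * K)%g| * x)%N) (leq_mul i1 i3). move=> hh; apply: (leq_trans hh); by rewrite mulnA.
  have : (j * q * M <= #|(H * K)%g| * q * M)%N.
    by rewrite E2; apply: (leq_trans bb); rewrite -E1; nia.
  rewrite leq_pmul2r // leq_pmul2r //.
Qed.

End Basic.

Section Main.
Variables (gT : finGroupType) (G : {group gT}).
Hypotheses (indG : indecomposable G) (pA : propertyA G).

Lemma mG1 : mG G 1%G = #|G|.
Proof. by rewrite /mG /= cards1 mul1n cent1T setIT. Qed.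

Lemma CD_Z H : H \in CD G -> ('Z(H))%G \in CD G.
Proof.
move=> HCD; have sHG := CD_sub HCD.
have [I _ _] := CD_meet_join HCD (CD_cent HCD).
apply: (CD_set I) => /=.
by rewrite /center setIA (setIidPl sHG).
Qed.

Lemma PA X : X \in CD G -> X <| G -> abelian X -> X :=: 1.
Proof.
move=> XCD nXG abX; apply/eqP; apply/negPn/negP => ntX.
have := pA nXG abX ntX.
rewrite card_quotient; last by rewrite normsI ?normG ?norms_cent ?normal_norm.
move: XCD; rewrite inCD => /andP [sXG /eqP mX].
have le1 := mG_le (sub1G G); rewrite mG1 -mX /mG in le1.
rewrite -(Lagrange (subsetIl G 'C(X))) mulnC in le1.
move=> lt; have c0 := cardG_gt0 ('C_G(X))%G; rewrite /= in c0.
move: le1; rewrite leq_pmul2r // leqNgt lt //.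
Qed.

Lemma mstarE : mstar G = #|G|.
Proof.
have [H0 H0CD] := CD_ex G.
case: (@arg_minnP _ H0 (fun M => M \in CD G) (fun M : {group gT} => #|M|) H0CD) => M MCD Mmin.
have sMG := CD_sub MCD; have /eqP mM : mG G M == mstar G by move: MCD; rewrite inCD => /andP[].
have nMG : M <| G.
  apply/normalP; split=> // y yG.
  have MyCD := CD_conj MCD yG.
  have [I _ _] := CD_meet_join MCD MyCD.
  have := Mmin _ I; rewrite /= => le.
  have sub : M \subset M :^ y.
    apply/setIidPl/eqP; rewrite eqEcard subsetIl //.
  apply/eqP; rewrite eq_sym eqEcard sub cardJg leqnn //.
have abM : abelian M.
  apply/center_idP/eqP; rewrite eqEcard center_sub /=.
  exact: (Mmin _ (CD_Z MCD)).
have M1 := PA MCD nMG abM.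
by rewrite -mM /mG M1 cards1 mul1n cent1T setIT.
Qed.

Lemma CD1 : (1%G : {group gT}) \in CD G.
Proof. by rewrite inCD sub1G mG1 mstarE eqxx. Qed.

Lemma Z1 : 'Z(G) = 1.
Proof.
apply/eqP; apply/negPn/negP => ntZ.
have := pA (center_normal G) (center_abelian G) ntZ.
rewrite quotientS1; last by rewrite subsetI subxx centsC subsetIr.
rewrite cards1 => h; have := cardG_gt0 ('Z(G))%G; lia.
Qed.

Lemma CDG : G \in CD G.
Proof. rewrite inCD subxx /= /mG mstarE; have -> : 'C_G(G) = 'Z(G) by []. by rewrite Z1 cards1 muln1. Qed.

Lemma mCD H : H \in CD G -> (#|H| * #|'C_G(H)| = #|G|)%N.
Proof. by rewrite inCD mstarE => /andP[_ /eqP]. Qed.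

Lemma lemK X : X \in CD G -> X :&: 'C_G(X) = 1 -> X :=: 1 \/ X :=: G.
Proof.
move=> XCD tI; have sXG := CD_sub XCD.
have mX := mCD XCD.
have e := mul_cardG X ('C_G(X))%G; rewrite /= tI cards1 muln1 mX in e.
have XC : X * 'C_G(X) = G.
  apply/eqP; rewrite eqEcard mul_subG ?subsetIl //= e leqnn //.
have dp : X \x 'C_G(X) = G by rewrite dprodE ?subsetIr.
have [->|ntX] := eqVneq X 1%G; first by left.
have [eC|ntC] := eqVneq ('C_G(X))%G 1%G.
  right; apply/eqP; rewrite eqEcard sXG /=.
  have : #|'C_G(X)| = 1%N by rewrite -[RHS](cards1 (1 : gT)) -[RHS]/#|(1%G : {group gT})| -eC.
  by move=> c1; rewrite -mX c1 muln1.
by exfalso; apply: indG; exists X, ('C_G(X))%G; split.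
Qed.

Lemma lemN X : X \in CD G -> X <| G -> X :=: 1 \/ X :=: G.
Proof.
move=> XCD nXG; apply: lemK => //.
have sXG := CD_sub XCD.
rewrite setIA (setIidPl sXG).
apply: PA; first exact: CD_Z.
- exact: char_normal_trans (center_char X) nXG.
- exact: center_abelian.
Qed.

Lemma conj_prod (H : {group gT}) y : y \in H * H :^ y -> H :^ y = H.
Proof.
case/mulsgP => a b aH bHy e.
have Hyb : H :^ y = H :^ b by rewrite e conjsgM (conjGid aH).
rewrite Hyb in bHy *.
have bH : b \in H by rewrite -(memJ_conjg H b b); rewrite conjgE mulKg.
by rewrite conjGid.
Qed.

Lemma MaxN (N P : {group gT}) : N <| G -> P \in CD G -> P :!=: 1 -> P \subset N -> N :=: G.
Proof.
move=> nNG PCD ntP sPN.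
have PP : (P \in CD G) && (P \subset N) by rewrite PCD sPN.
case: (@arg_maxnP _ P (fun X : {group gT} => (X \in CD G) && (X \subset N)) (fun X : {group gT} => #|X|) PP) => X /andP[XCD sXN] Xmax.
have nXG : X <| G.
  apply/normalP; split; first exact: CD_sub XCD.
  move=> y yG; have XyCD := CD_conj XCD yG.
  have [_ J _] := CD_meet_join XCD XyCD.
  have nNy : N :^ y = N by have [_ h] := normalP nNG; exact: h.
  have sJN : X <*> X :^ y \subset N.
    by rewrite join_subG sXN /= -nNy conjSg sXN.
  have le : #|X <*> X :^ y| <= #|X| by apply: (Xmax _); rewrite J sJN.
  have eJ : X = X <*> X :^ y :> {set gT}.
    by apply/eqP; rewrite eqEcard joing_subl le.
  have sXy : X :^ y \subset X by rewrite {2}eJ joing_subr.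
  by apply/eqP; rewrite eqEcard sXy cardJg leqnn.
have [X1|XG] := lemN XCD nXG.
  have := Xmax _ PP; rewrite X1 cards1 => le1.
  have le1' : #|P| <= 1 := le1; by move: ntP; rewrite trivg_card_le1 le1'.
apply/eqP; rewrite eqEcard (normal_sub nNG) /=.
by apply: subset_leq_card; rewrite -XG.
Qed.

Lemma CDs H : H \in CD G -> H :=: 1 \/ H :=: G.
Proof.
move=> HCD.
have [->|ntH] := eqVneq H 1%G; first by left.
have [->|nGH] := eqVneq H G; first by right.
exfalso.
have ntH' : H :!=: 1 by apply: contraNneq ntH => e; apply/eqP; apply: group_inj.
have PP : (H \in CD G) && (H :!=: 1) by rewrite HCD ntH'.
case: (@arg_minnP _ H (fun X : {group gT} => (X \in CD G) && (X :!=: 1)) (fun X : {group gT} => #|X|) PP) => P /andP[PCD ntP] Pmin.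
have sPG := CD_sub PCD.
have PneG : ~ (P :=: G).
  move=> PG; move/eqP: nGH; apply; apply: group_inj; apply/eqP.
  by rewrite eqEcard (CD_sub HCD) /= -PG (Pmin _ PP).
have minP X : X \in CD G -> X :!=: 1 -> #|P| <= #|X|.
  by move=> XCD ntX; apply: Pmin; rewrite XCD ntX.
have subP X : X \in CD G -> X \subset P -> X :!=: 1 -> X :=: P.
  by move=> XCD sXP ntX; apply/eqP; rewrite eqEcard sXP minP.
have abP : abelian P.
  have [Z1'|ntZ] := eqVneq ('Z(P))%G 1%G.
    have : P :&: 'C_G(P) = 1.
      by rewrite setIA (setIidPl sPG); move: Z1' => /(congr1 val).
    move/(lemK PCD) => [P1|PG]; last by case: PneG.
    by move: ntP; rewrite P1 eqxx.
  apply/center_idP; apply: subP (CD_Z PCD) (center_sub _) _.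
  by apply: contraNneq ntZ => e; apply/eqP; apply: group_inj.
set Q := 'C_G(P).
have QCD : ('C_G(P))%G \in CD G := CD_cent PCD.
have sPQ : P \subset Q by rewrite subsetI sPG.
have [allc|] := boolP [forall (y | y \in G), P :^ y \subset Q].
  have sPN : P \subset gcore Q G.
    apply/bigcapsP => x xG; rewrite -sub_conjgV.
    by apply: (forall_inP allc); rewrite groupV.
  have nNG : gcore Q G <| G.
    by rewrite /normal gcore_norm andbT (subset_trans (gcore_sub _ _) (subsetIl _ _)).
  have NG := MaxN (N := (gcore Q G)%G) nNG PCD ntP sPN.
  have sGQ : G \subset Q by rewrite -{1}NG gcore_sub.
  have : P \subset 'Z(G).
    by rewrite subsetI sPG centsC; apply: subset_trans sGQ (subsetIr _ _).
  rewrite Z1 => /trivgP P1.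
  by move: ntP; rewrite P1 eqxx.
case/forall_inPn => y yG nsub.
have PyCD := CD_conj PCD yG.
have [I _ _] := CD_meet_join PyCD QCD.
have tI : P :^ y :&: Q = 1.
  apply/eqP; apply/negPn/negP => ntI.
  have le := minP _ I ntI.
  have eI : P :^ y :&: Q = P :^ y.
    by apply/eqP; rewrite eqEcard subsetIl cardJg le.
  by move: nsub; rewrite -eI subsetIr.
have [_ DCD eD] := CD_meet_join PCD PyCD.
set D := P <*> P :^ y in DCD eD *.
have sDG : D \subset G := CD_sub DCD.
have DQ : D :&: Q = P.
  by rewrite -eD -group_modl // tI mulg1.
have sZP : 'Z(D) \subset P.
  rewrite -DQ subsetI center_sub /= subsetI (subset_trans (center_sub _) sDG) /=.
  by apply: subset_trans (subsetIr _ _) (centS (joing_subl _ _)).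
have ZD1 : 'Z(D) = 1.
  apply/eqP; apply/negPn/negP => ntZ.
  have ZP : 'Z(D) = P.
    by apply/eqP; rewrite eqEcard sZP (minP _ (CD_Z DCD)).
  have : D \subset 'C(P) by rewrite centsC -ZP subsetIr.
  move=> sDC; move: nsub; rewrite subsetI (conj_subG yG sPG) /=.
  by rewrite (subset_trans (joing_subr _ _) sDC).
have : D :&: 'C_G(D) = 1 by rewrite setIA (setIidPl sDG).
move/(lemK DCD) => [D1|DG].
  by move: ntP; rewrite -subG1 -D1 joing_subl.
have DG' : P <*> P :^ y = G by exact: DG.
have yPP : y \in P * P :^ y.
  by rewrite eD /D DG'.
move: nsub; rewrite (conj_prod yPP) sPQ //.
Qed.

End Main.

Theorem corollary1 (gT : finGroupType) (G : {group gT}) :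
  indecomposable G -> (propertyA G <-> CD_simple G).
Proof.
move=> indG; split.
- move=> pA; apply/setP => H.
  apply/idP/idP.
  + move=> HCD; rewrite !inE.
    case: (CDs indG pA HCD) => e; apply/orP; [left|right]; apply/eqP; exact: group_inj.
  + move=> h; rewrite !inE in h; case/orP: h => /eqP ->; [exact: (CD1 pA)|exact: (CDG pA)].
- move=> cds A nAG abA ntA.
  have C1 : (1%G : {group gT}) \in CD G by rewrite cds !inE eqxx.
  have CG : G \in CD G by rewrite cds !inE eqxx orbT.
  have mS : mstar G = #|G|.
    by move: C1; rewrite inCD => /andP[_ /eqP <-]; rewrite mG1.
  have ZG : #|'C_G(G)| = 1%N.
    move: CG; rewrite inCD mS /mG => /andP[_ /eqP].
    by rewrite -{2}(muln1 #|G|) => /eqP; rewrite eqn_mul2l (negbTE (lt0n_neq0 (cardG_gt0 G))) /= => /eqP.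
  have sAG := normal_sub nAG.
  have ltm : mG G A < mstar G.
    rewrite ltn_neqAle mG_le // andbT; apply/negP => /eqP mA.
    have : A \in CD G by rewrite inCD sAG mA eqxx.
    rewrite cds !inE => /orP[/eqP A1|/eqP AG].
      by move: ntA; rewrite A1 eqxx.
    rewrite AG in abA ntA.
    move: ZG; rewrite (setIidPl abA) => g1.
    by move: ntA; rewrite trivg_card_le1 g1.
  rewrite card_quotient ?normsI ?normG ?norms_cent ?normal_norm //.
  rewrite mS /mG -(Lagrange (subsetIl G 'C(A))) mulnC in ltm.
  by rewrite ltn_pmul2l ?cardG_gt0 in ltm.
Qed.
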